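(* For every language $L\subseteq\Sigma^+$: if $(\Sigma^+\setminus L)\in LinConj$, then $L\in\mathtt{incl}$-$\mathtt{ESO}$-$\mathtt{HORN}$.
   Context: Fix a finite alphabet $\Sigma$. A nonempty word $w=w_1\cdots w_n$ is represented by the structure $\langle w\rangle=([1,n];(Q_s)_{s\in\Sigma},\mathtt{min},\mathtt{max},\mathtt{suc},\mathtt{pred})$ with $Q_s(i)\iff w_i=s$, $\mathtt{min}(i)\iff i=1$, $\mathtt{max}(i)\iff i=n$, $\mathtt{suc}(i)=\min(i+1,n)$, $\mathtt{pred}(i)=\max(i-1,1)$. For an integer $a$, $x+a$ denotes $\mathtt{suc}^a(x)$ if $a\ge0$ and $\mathtt{pred}^{-a}(x)$ if $a<0$; $y-b=\mathtt{pred}^b(y)$. An inclusion Horn formula is $\Phi=\exists\mathbf{R}\forall x\forall y\,\psi(x,y)$, $\mathbf{R}$ a finite set of binary relation symbols, $\psi$ a conjunction of Horn clauses over $\{(Q_s)_{s\in\Sigma},\mathtt{min},\mathtt{max},\mathtt{suc},\mathtt{pred}\}\cup\mathbf{R}\cup\{=,\le,<\}$, each of the form $x\le y\wedge\delta_1\wedge\cdots\wedge\delta_r\to\delta_0$ with $\delta_0$ an atom $R(x,y)$ ($R\in\mathbf{R}$) or $\bot$, each $\delta_i$ one of: $U(x+a)$, $\neg U(x+a)$, $U(y+a)$, $\neg U(y+a)$ for $U\in\{(Q_s)_{s\in\Sigma},\mathtt{min},\mathtt{max}\}$, $a\in\mathbb Z$; $x=y$ or $x<y$; $S(x+a,y-b)\wedge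 x+a\le y-b$ with $S\in\mathbf{R}$, $a,b\ge0$. $\mathtt{incl}$-$\mathtt{ESO}$-$\mathtt{HORN}$ is the class of languages $\{w\in\Sigma^+:\langle w\rangle\models\Phi\}$. A linear conjunctive grammar is $G=(\Sigma,N,P,S)$ with nonterminals $N$, start symbol $S\in N$, and a finite set $P$ of rules $A\to\alpha_1\&\cdots\&\alpha_k$ ($k\ge1$), each $\alpha_i\in\Sigma^*\cup\Sigma^*N\Sigma^*$. The languages $(L(A))_{A\in N}$ form the least (componentwise) solution of $L(A)=\bigcup_{(A\to\alpha_1\&\cdots\&\alpha_k)\in P}\bigcap_iL(\alpha_i)$, where $L(uBv)=uL(B)v$, $L(u)=\{u\}$ for $u,v\in\Sigma^*$, $B\in N$; $L(G)=L(S)$. $LinConj$ is the class of languages generated by such grammars. *)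

(* Defs.v *)
From mathcomp Require Import all_boot all_algebra.
From Stdlib Require List.
Set Implicit Arguments. Unset Strict Implicit. Unset Printing Implicit Defensive.

(* Words are [seq Sigma]; a language is a predicate on words.
   Positions of a word w of length n are the naturals 1..n. *)

Section Defs.
Variable Sigma : finType.

Definition wsuc (w : seq Sigma) (i : nat) : nat := minn i.+1 (size w).
Definition wpred (i : nat) : nat := maxn i.-1 1.
Definition wQ (w : seq Sigma) (s : Sigma) (i : nat) : bool :=
  (0 < i <= size w) && (nth s w i.-1 == s).
Definition wmin (i : nat) : bool := i == 1.
Definition wmax (w : seq Sigma) (i : nat) : bool := i == size w.

(* x + a for a : int  (suc^a or pred^(-a)) *)
Definition shift (w : seq Sigma) (x : nat) (a : int) : nat :=
  match a with
  | Posz k => iter k (wsuc w) x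
  | Negz k => iter k.+1 wpred x
  end.
Definition shiftdown (y : nat) (b : nat) : nat := iter b wpred y.

Inductive fovar := VX | VY.
Inductive upred := UQ of Sigma | UMin | UMax.

Inductive hlit (Rel : Type) :=
  | LUnary of bool & upred & fovar & int
      (* LUnary true U z a = U(z+a), LUnary false U z a = ~ U(z+a) *)
  | LEq
  | LLt
  | LRel of Rel & nat & nat (* S(x+a, y-b) /\ x+a <= y-b, a b >= 0 *).

(* A Horn clause  x <= y /\ d_1 /\ ... /\ d_r -> d_0 ;
   head [Some R] is R(x,y), head [None] is bottom. *)
Record hclause (Rel : Type) := HClause { hbody : seq (hlit Rel); hhead : option Rel }.

Definition upred_sem (w : seq Sigma) (U : upred) (i : nat) : bool :=
  match U with UQ s => wQ w s i | UMin => wmin i | UMax => wmax w i end.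

Definition hlit_sem (Rel : Type) (w : seq Sigma) (I : Rel -> nat -> nat -> Prop)
    (x y : nat) (d : hlit Rel) : Prop :=
  match d with
  | LUnary b U z a =>
      let p := shift w (if z is VX then x else y) a in
      upred_sem w U p = b
  | LEq => x = y
  | LLt => x < y
  | LRel Sr a b =>
      I Sr (shift w x (Posz a)) (shiftdown y b) /\ shift w x (Posz a) <= shiftdown y b
  end.

Definition hclause_sem (Rel : Type) (w : seq Sigma) (I : Rel -> nat -> nat -> Prop)
    (x y : nat) (c : hclause Rel) : Prop :=
  x <= y -> (forall d, List.In d (hbody c) -> hlit_sem w I x y d) ->
  match hhead c with Some R => I R x y | None => False end.

Definition horn_sat (Rel : Type) (cls : seq (hclause Rel)) (w : seq Sigma) : Prop :=
  exists I : Rel -> nat -> nat -> Prop,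
    forall x y, 0 < x <= size w -> 0 < y <= size w ->
      forall c, List.In c cls -> hclause_sem w I x y c.

Definition incl_ESO_HORN (L : seq Sigma -> Prop) : Prop :=
  exists (Rel : finType) (cls : seq (hclause Rel)),
    forall w, L w <-> (w <> [::] /\ horn_sat cls w).

Inductive lconj (N : Type) :=
  | CTerm of seq Sigma
  | CNont of seq Sigma & N & seq Sigma .

(* a rule A -> alpha_1 & ... & alpha_k is a pair (A, [alpha_1; ...; alpha_k]) *)
Definition lrule (N : Type) := (N * seq (lconj N))%type.

Definition lconj_sem (N : Type) (X : N -> seq Sigma -> Prop) (a : lconj N)
    (w : seq Sigma) : Prop :=
  match a with
  | CTerm u => w = u
  | CNont u B v => exists w', w = u ++ w' ++ v /\ X B w'
  end.

Definition lstep (N : Type) (P : seq (lrule N)) (X : N -> seq Sigma -> Prop)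
    (A : N) (w : seq Sigma) : Prop :=
  exists alphas, List.In (A, alphas) P /\
    forall a, List.In a alphas -> lconj_sem X a w.

(* The least (componentwise) solution, as the intersection of all
   pre-fixed points of the monotone operator lstep (Knaster-Tarski). *)
Definition lgen (N : Type) (P : seq (lrule N)) (A : N) (w : seq Sigma) : Prop :=
  forall X : N -> seq Sigma -> Prop,
    (forall B u, lstep P X B u -> X B u) -> X A w.

Definition LinConj (L : seq Sigma -> Prop) : Prop :=
  exists (N : finType) (P : seq (lrule N)) (St : N),
    (forall r, List.In r P -> r.2 <> [::]) /\
    (forall w, L w <-> lgen P St w).

End Defs.

(* Main.v *)
Require Import Defs.
From mathcomp Require Import all_boot all_algebra zify.
From Stdlib Require ClassicalEpsilon.
Set Implicit Arguments. Unset Strict Implicit. Unset Printing Implicit Defensive.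

Definition sub (T : Type) (w : seq T) i j := drop i (take j w).

Lemma size_sub (T : Type) (w : seq T) i j : j <= size w -> size (sub w i j) = j - i.
Proof. move=> h; rewrite /sub size_drop size_take; case: ltnP => //; lia. Qed.

Lemma nth_sub (T : Type) (x0 : T) (w : seq T) i j k :
  i + k < j -> nth x0 (sub w i j) k = nth x0 w (i + k).
Proof. move=> h; rewrite /sub nth_drop nth_take //. Qed.

Lemma sub_eqP (T : Type) (x0 : T) (w t : seq T) p q : q <= size w ->
  sub w p q = t <-> size t = q - p /\ forall k, k < q - p -> nth x0 w (p + k) = nth x0 t k.
Proof.
move=> hq; split.
- move=> <-; rewrite size_sub //; split => // k hk; rewrite nth_sub //; lia.
- move=> [hs hn]; apply: (@eq_from_nth _ x0); first by rewrite size_sub.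
  move=> k; rewrite size_sub // => hk; rewrite nth_sub; last lia. by rewrite hn.
Qed.

Lemma sub_cat (T : Type) (x0 : T) (w : seq T) p q r : p <= q -> q <= r -> r <= size w ->
  sub w p r = sub w p q ++ sub w q r.
Proof.
move=> h1 h2 h3; apply: (@eq_from_nth _ x0).
  rewrite size_cat !size_sub //; lia.
move=> k; rewrite size_sub // => hk; rewrite nth_cat size_sub; last lia.
case: ltnP => hk2; rewrite !nth_sub //; try lia. congr nth; lia.
Qed.

Lemma cat_inj (T : Type) (s1 s2 t1 t2 : seq T) : size s1 = size t1 ->
  s1 ++ s2 = t1 ++ t2 -> s1 = t1 /\ s2 = t2.
Proof.
move=> hs e; split.
- by rewrite -(take_size_cat s2 (erefl (size s1))) e take_size_cat.
- by rewrite -(drop_size_cat s2 (erefl (size s1))) e drop_size_cat.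
Qed.

Lemma sub_rev_eqP (T : Type) (x0 : T) (w v : seq T) q : q <= size w -> size v <= q ->
  sub w (q - size v) q = v <-> forall k, k < size v -> nth x0 w (q - 1 - k) = nth x0 (rev v) k.
Proof.
move=> hq hv; rewrite (sub_eqP x0) //; split.
- move=> [_ hn] k hk; rewrite nth_rev // -hn; last lia. congr nth; lia.
- move=> hn; split; first lia. move=> k hk.
  have := hn (size v - k.+1); rewrite nth_rev; last lia.
  have -> : size v - (size v - k.+1).+1 = k by lia.
  move=> <-; last lia. congr nth; lia.
Qed.

Lemma size_sub_eq (T : Type) (x0 : T) (w u : seq T) i j :
  j <= size w -> forall (h : i + size u <= j), size (sub w i (i + size u)) = size u.
Proof. move=> hj h; rewrite size_sub; lia. Qed.

Lemma dec (T : Type) (x0 : T) (w u z v : seq T) i j : i <= j -> j <= size w ->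
  sub w i j = u ++ z ++ v <->
  [/\ i + size u + size v <= j,
      (forall k, k < size u -> nth x0 w (i + k) = nth x0 u k),
      (forall k, k < size v -> nth x0 w (j - 1 - k) = nth x0 (rev v) k) &
      z = sub w (i + size u) (j - size v)].
Proof.
move=> hij hj; split.
- move=> e.
  have hs : i + size u + size v <= j.
    have := congr1 size e; rewrite size_sub // !size_cat; lia.
  rewrite (sub_cat x0 (q := i + size u)) in e; try lia.
  rewrite (sub_cat x0 (p := i + size u) (q := j - size v)) in e; try lia.
  have [e1 e2] := cat_inj (@size_sub_eq _ x0 w u i j hj ltac:(lia)) e.
  have [e3 e4] : sub w (i + size u) (j - size v) = z /\ sub w (j - size v) j = v.
    refine (cat_inj _ e2); rewrite size_sub //; have := congr1 size e2; rewrite !size_cat !size_sub //; lia.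
  have [_ hu] := proj1 (@sub_eqP _ x0 w u i (i + size u) ltac:(lia)) e1; split => //.
  + move=> k hk; rewrite hu //; lia.
  + by apply/(sub_rev_eqP x0) => //; lia.
- move=> [hs hu hv ->].
  rewrite (sub_cat x0 (q := i + size u)); try lia.
  rewrite (sub_cat x0 (p := i + size u) (q := j - size v)); try lia.
  congr (_ ++ (_ ++ _)).
  + apply/(sub_eqP x0); first lia. split; first lia. move=> k hk; apply: hu; lia.
  + by apply/(sub_rev_eqP x0) => //; lia.
Qed.

Definition lits (Sigma : finType) (R : Type) (w : seq Sigma) (I : R -> nat -> nat -> Prop)
  x y (ds : seq (hlit Sigma R)) := forall d, List.In d ds -> hlit_sem w I x y d.

Lemma lits_nil (Sigma : finType) (R : Type) w (I : R -> nat -> nat -> Prop) x y :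
  lits w I x y ([::] : seq (hlit Sigma R)).
Proof. by []. Qed.

Lemma lits_cons (Sigma : finType) (R : Type) w (I : R -> nat -> nat -> Prop) x y d
  (ds : seq (hlit Sigma R)) :
  lits w I x y (d :: ds) <-> hlit_sem w I x y d /\ lits w I x y ds.
Proof.
split.
- move=> h; split; first by apply: h; left.
  by move=> e he; apply: h; right.
- by move=> [h1 h2] e [<-|he] //; apply: h2.
Qed.

Lemma lits_cat (Sigma : finType) (R : Type) w (I : R -> nat -> nat -> Prop) x y
  (ds es : seq (hlit Sigma R)) :
  lits w I x y (ds ++ es) <-> lits w I x y ds /\ lits w I x y es.
Proof.
split.
- move=> h; split => d hd; apply: h; apply: List.in_or_app; [left|right]; exact: hd.
- move=> [h1 h2] d hd; case: (List.in_app_or _ _ _ hd) => h; [exact: h1|exact: h2].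
Qed.

Lemma iter_wsuc (Sigma : finType) (w : seq Sigma) x k : x <= size w ->
  iter k (wsuc w) x = minn (x + k) (size w).
Proof.
move=> hx; elim: k => [|k IH] /=; first by rewrite addn0; lia.
by rewrite IH /wsuc; lia.
Qed.

Lemma iter_wpred y j : 0 < y -> iter j wpred y = maxn (y - j) 1.
Proof.
move=> hy; elim: j => [|j IH] /=; first by lia.
by rewrite IH /wpred; lia.
Qed.

Definition negint (j : nat) : int := if j is j'.+1 then Negz j' else Posz 0.

Lemma shift_negint (Sigma : finType) (w : seq Sigma) y j :
  shift w y (negint j) = iter j wpred y.
Proof. by case: j. Qed.

Lemma wQ_iff (Sigma : finType) (s0 : Sigma) w s p :
  wQ w s p = true <-> 0 < p <= size w /\ nth s0 w p.-1 = s.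
Proof.
rewrite /wQ; split.
- case/andP=> /andP [h1 h2] /eqP e; split; first by rewrite h1 h2.
  rewrite (set_nth_default s) //; lia.
- move=> [/andP [h1 h2] e]; rewrite h1 h2 /=; apply/eqP.
  rewrite (set_nth_default s0) //; lia.
Qed.

Fixpoint lx (Sigma : finType) (R : Type) (u : seq Sigma) (i : nat) : seq (hlit Sigma R) :=
  match u with
  | [::] => [::]
  | s :: u' => LUnary R true (UQ s) VX (Posz i) :: LUnary R false (UMax Sigma) VX (Posz i) :: lx R u' i.+1
  end.

Lemma lx_iff (Sigma : finType) (s0 : Sigma) (R : Type) w (I : R -> nat -> nat -> Prop) x y u i :
  0 < x -> x + i <= size w ->
  lits w I x y (lx R u i) <->
  (0 < size u -> x + i + size u <= size w) /\
  forall k, k < size u -> nth s0 w (x - 1 + i + k) = nth s0 u k.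
Proof.
elim: u i => [|s u IH] i hx hi /=.
  split=> _; [by split => // k | by move=> d []].
rewrite !lits_cons /= iter_wsuc; last lia.
have -> : minn (x + i) (size w) = x + i by lia.
rewrite (wQ_iff s0) /wmax.
split.
- move=> [[h1 h2] [h3 h4]].
  have hi' : x + i.+1 <= size w by move/eqP: h3; lia.
  case/(IH _ hx hi'): h4 => h5 h6; split.
    move=> _; case: (posnP (size u)) => hu; last by have := h5 hu; lia.
    lia.
  case=> [|k] hk /=; first by rewrite addn0 -h2; congr nth; lia.
  rewrite -h6; last lia. congr nth; lia.
- move=> [h1 h2].
  have hlt : x + i < size w by have := h1 isT; lia.
  have hi' : x + i.+1 <= size w by lia.
  split; first split.
  + lia.
  + by have := h2 0 isT; rewrite addn0 /= => <-; congr nth; lia.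
  split; first by apply/eqP; lia.
  apply/(IH _ hx hi'); split.
  + move=> hu; have := h1 isT; lia.
  + move=> k hk; have := h2 k.+1 hk; rewrite /= => <-; congr nth; lia.
Qed.

Fixpoint lyr (Sigma : finType) (R : Type) (r : seq Sigma) (j : nat) : seq (hlit Sigma R) :=
  match r with
  | [::] => [::]
  | s :: r' => LUnary R true (UQ s) VY (negint j) :: LUnary R false (UMin Sigma) VY (negint j)
               :: lyr R r' j.+1
  end.

Lemma lyr_iff (Sigma : finType) (s0 : Sigma) (R : Type) w (I : R -> nat -> nat -> Prop) x y r j :
  0 < y <= size w -> j < y ->
  lits w I x y (lyr R r j) <->
  (0 < size r -> j + size r < y) /\
  forall k, k < size r -> nth s0 w (y - 1 - j - k) = nth s0 r k.
Proof.
elim: r j => [|s r IH] j hy hj /=.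
  split=> _; [by split => // k | by move=> d []].
rewrite !lits_cons /= shift_negint iter_wpred; last lia.
have -> : maxn (y - j) 1 = y - j by lia.
rewrite (wQ_iff s0) /wmin.
split.
- move=> [[h1 h2] [h3 h4]].
  have hj' : j.+1 < y by move/eqP: h3; lia.
  case/(IH _ hy hj'): h4 => h5 h6; split.
    move=> _; case: (posnP (size r)) => hu; last by have := h5 hu; lia.
    lia.
  case=> [|k] hk /=; first by rewrite subn0 -h2; congr nth; lia.
  rewrite -h6; last lia. congr nth; lia.
- move=> [h1 h2].
  have hlt : j.+1 < y by have := h1 isT; lia.
  split; first split.
  + lia.
  + by have := h2 0 isT; rewrite subn0 /= => <-; congr nth; lia.
  split; first by apply/eqP; lia.
  apply/(IH _ hy hlt); split.
  + move=> hu; have := h1 isT; lia.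
  + move=> k hk; have := h2 k.+1 hk; rewrite /= => <-; congr nth; lia.
Qed.

Definition fac (Sigma : finType) (w : seq Sigma) x y := sub w (x - 1) y.

Definition mid_lits (Sigma : finType) (N : Type) (u : seq Sigma) (B : N) (v : seq Sigma)
  : seq (hlit Sigma (option N)) :=
  lx _ u 0 ++ lyr _ (rev v) 0 ++ [:: @LRel Sigma (option N) (Some B) (size u) (size v)].

Definition term_lits (Sigma : finType) (N : Type) (s : Sigma) (u : seq Sigma)
  : seq (hlit Sigma (option N)) :=
  LUnary _ true (UQ s) VX (Posz 0) :: lyr _ (rev u) 0 ++ [:: @LRel Sigma (option N) None 0 (size u)].

Lemma mid_iff (Sigma : finType) (s0 : Sigma) (N : Type) (w : seq Sigma) (I : option N -> nat -> nat -> Prop)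
  x y u B v : 0 < x -> x <= y -> y <= size w ->
  lits w I x y (mid_lits u B v) <->
  [/\ x + size u + size v <= y,
      fac w x y = u ++ fac w (x + size u) (y - size v) ++ v &
      I (Some B) (x + size u) (y - size v)].
Proof.
move=> hx hxy hy.
rewrite /mid_lits !lits_cat (lx_iff s0) ?addn0; try lia.
rewrite (lyr_iff s0); try lia.
rewrite lits_cons /= /shiftdown iter_wsuc ?iter_wpred; try lia.
rewrite size_rev /fac.
have D := @dec Sigma s0 w u (sub w (x + size u - 1) (y - size v)) v (x - 1) y (leq_trans (leq_subr 1 x) hxy) hy.
split.
- move=> [[ha hu] [[hb hv] [[hI hle] _]]].
  have hs : x + size u + size v <= y.
    case: (posnP (size u)) => hu0; case: (posnP (size v)) => hv0;
      try (have := ha hu0); try (have := hb hv0); lia.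
  have e1 : minn (x + size u) (size w) = x + size u by lia.
  have e2 : maxn (y - size v) 1 = y - size v by lia.
  rewrite e1 e2 in hI; split => //.
  apply/(proj2 D); split; try lia.
  + move=> k hk; rewrite -hu //; congr nth; lia.
  + move=> k hk; rewrite -hv //; congr nth; lia.
  + congr sub; lia.
- move=> [hs e hI].
  have [_ hu hv _] := proj1 D e.
  have e1 : minn (x + size u) (size w) = x + size u by lia.
  have e2 : maxn (y - size v) 1 = y - size v by lia.
  rewrite e1 e2; split; [split|split; [split|split]] => //; try lia.
  + move=> k hk; rewrite subn0; exact: hv.
  + split; [exact: hI | lia].
Qed.

Lemma sub_nil (T : Type) (w : seq T) p q : p = q -> q <= size w -> sub w p q = [::].
Proof. move=> e h; apply/size0nil; rewrite size_sub //; lia. Qed.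

Lemma term_sound (Sigma : finType) (s0 : Sigma) (N : Type) (w : seq Sigma)
  (I : option N -> nat -> nat -> Prop) x y s u : 0 < x -> x <= y -> y <= size w ->
  (forall p q, I None p q -> p = q) ->
  lits w I x y (term_lits N s u) -> fac w x y = s :: u.
Proof.
move=> hx hxy hy HEQ.
rewrite /term_lits lits_cons lits_cat (lyr_iff s0); try lia.
rewrite lits_cons /= /shiftdown ?iter_wpred; try lia.
rewrite (wQ_iff s0) size_rev.
move=> [[h1 h2] [[hb hv] [[hI hle] _]]].
have e := HEQ _ _ hI.
have hs : x + size u = y.
  case: (posnP (size u)) => hu0; try (have := hb hu0); lia.
have D := @dec Sigma s0 w [:: s] [::] u (x - 1) y (leq_trans (leq_subr 1 x) hxy) hy.
apply/(proj2 D); split => /=.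
- lia.
- case=> // _; rewrite addn0 -h2; congr nth; lia.
- move=> k hk; rewrite -hv //; congr nth; lia.
- symmetry; apply: sub_nil; lia.
Qed.

Lemma term_complete (Sigma : finType) (s0 : Sigma) (N : Type) (w : seq Sigma)
  (I : option N -> nat -> nat -> Prop) x y s u : 0 < x -> x <= y -> y <= size w ->
  (forall p, 0 < p <= size w -> I None p p) ->
  fac w x y = s :: u -> lits w I x y (term_lits N s u).
Proof.
move=> hx hxy hy HEQ e.
have D := @dec Sigma s0 w [:: s] [::] u (x - 1) y (leq_trans (leq_subr 1 x) hxy) hy.
have [/= hs hu hv h4] := proj1 D e.
have h5 := congr1 size h4; rewrite size_sub /= in h5; last lia.
rewrite /term_lits lits_cons lits_cat (lyr_iff s0); try lia.
rewrite lits_cons /= /shiftdown ?iter_wpred; try lia.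
rewrite (wQ_iff s0) size_rev.
have e2 : maxn (y - size u) 1 = x by lia.
rewrite e2; split; [split|split; [split|split]].
- lia.
- by have := hu 0 isT; rewrite addn0 /= => <-; congr nth; lia.
- lia.
- move=> k hk; rewrite subn0 -hv //.
- split; [apply: HEQ; lia | lia].
- by move=> d [].
Qed.

Definition alt (Sigma : finType) (N : Type) (epsb : N -> bool) (a : lconj Sigma N)
  : seq (seq (hlit Sigma (option N))) :=
  match a with
  | CTerm u => if u is s :: u' then [:: term_lits N s u'] else [::]
  | CNont u B v =>
      (if epsb B then (if u ++ v is s :: u' then [:: term_lits N s u'] else [::]) else [::])
      ++ [:: mid_lits u B v]
  end.

Fixpoint combos (Sigma : finType) (N : Type) (epsb : N -> bool) (al : seq (lconj Sigma N))
  : seq (seq (hlit Sigma (option N))) :=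
  match al with
  | [::] => [:: [::]]
  | a :: al' => List.flat_map (fun b => List.map (fun r => b ++ r) (combos epsb al')) (alt epsb a)
  end.

Lemma combos_sound (Sigma : finType) (N : Type) (epsb : N -> bool) (w : seq Sigma)
  (I : option N -> nat -> nat -> Prop) x y al c :
  List.In c (combos epsb al) -> lits w I x y c ->
  forall a, List.In a al -> exists b, List.In b (alt epsb a) /\ lits w I x y b.
Proof.
elim: al c => [|a al IH] c /=; first by move=> _ _ a [].
move=> /List.in_flat_map [b [hb /List.in_map_iff [r [<- hr]]]] /lits_cat [h1 h2] a' [<-|ha].
- by exists b.
- exact: IH hr h2 a' ha.
Qed.

Lemma combos_complete (Sigma : finType) (N : Type) (epsb : N -> bool) (w : seq Sigma)
  (I : option N -> nat -> nat -> Prop) x y al :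
  (forall a, List.In a al -> exists b, List.In b (alt epsb a) /\ lits w I x y b) ->
  exists c, List.In c (combos epsb al) /\ lits w I x y c.
Proof.
elim: al => [|a al IH] /= h.
  by exists [::]; split; [left | move=> d []].
have [b [hb lb]] := h a (or_introl erefl).
have [r [hr lr]] := IH (fun a' ha' => h a' (or_intror ha')).
exists (b ++ r); split; last by apply/lits_cat.
apply/List.in_flat_map; exists b; split => //.
by apply/List.in_map_iff; exists r.
Qed.

Lemma size_fac (Sigma : finType) (w : seq Sigma) x y : 0 < x -> x <= y -> y <= size w ->
  size (fac w x y) = y - x + 1.
Proof. move=> *; rewrite /fac size_sub //; lia. Qed.

Lemma alt_sound (Sigma : finType) (s0 : Sigma) (N : Type) (epsb : N -> bool) (w : seq Sigma)
  (I : option N -> nat -> nat -> Prop) (X : N -> seq Sigma -> Prop) x y a b :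
  0 < x -> x <= y -> y <= size w ->
  (forall p q, I None p q -> p = q) ->
  (forall B p q, I (Some B) p q -> X B (fac w p q)) ->
  (forall B, epsb B -> X B [::]) ->
  List.In b (alt epsb a) -> lits w I x y b -> lconj_sem X a (fac w x y).
Proof.
move=> hx hxy hy HEQ HB Heps.
case: a => [u|u B v] /=.
- case: u => [|s u] //= [<-|[]] hl.
  exact: (term_sound s0 hx hxy hy HEQ hl).
- move=> hb; case: (List.in_app_or _ _ _ hb) => {hb}.
  + case hE: (epsb B) => //; case hc: (u ++ v) => [|s u'] //= [<-|[]] hl.
    exists [::]; split; last exact: Heps.
    by rewrite (term_sound s0 hx hxy hy HEQ hl) /= -hc.
  + move=> [<-|[]] /(mid_iff s0 _ _ _ _ hx hxy hy) [hs e hI].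
    by exists (fac w (x + size u) (y - size v)); split => //; apply: HB.
Qed.

Lemma alt_complete (Sigma : finType) (s0 : Sigma) (N : Type) (epsb : N -> bool) (w : seq Sigma)
  (I : option N -> nat -> nat -> Prop) (X : N -> seq Sigma -> Prop) x y a :
  0 < x -> x <= y -> y <= size w ->
  (forall p, 0 < p <= size w -> I None p p) ->
  (forall B p q, 0 < p -> p <= q -> q <= size w -> X B (fac w p q) -> I (Some B) p q) ->
  (forall B, X B [::] -> epsb B) ->
  lconj_sem X a (fac w x y) -> exists b, List.In b (alt epsb a) /\ lits w I x y b.
Proof.
move=> hx hxy hy HEQ HB Heps.
have hsz := size_fac hx hxy hy.
case: a => [u|u B v] /=.
- move=> e; case: u e => [|s u] e.
    by have := congr1 size e; rewrite hsz /=; lia.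
  exists (term_lits N s u); split; first by left.
  exact: (term_complete s0 hx hxy hy HEQ e).
- move=> [w' [e hX]].
  case: w' e hX => [|t w''] e hX.
  + have hE := Heps _ hX.
    rewrite /= in e.
    case hc: (u ++ v) e => [|s u'] e.
      by have := congr1 size e; rewrite hsz /=; lia.
    exists (term_lits N s u'); split.
      by apply: List.in_or_app; left; rewrite hE; left.
    exact: (term_complete s0 hx hxy hy HEQ e).
  + exists (mid_lits u B v); split.
      by apply: List.in_or_app; right; left.
    have D := @dec Sigma s0 w u (t :: w'') v (x - 1) y (leq_trans (leq_subr 1 x) hxy) hy.
    have [hs _ _ hz] := proj1 D e.
    have hs2 := congr1 size e; rewrite hsz !size_cat /= in hs2.
    apply/(mid_iff s0 _ _ _ _ hx hxy hy); split.
    * lia.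
    * rewrite e /fac hz; congr (_ ++ sub _ _ _ ++ _); lia.
    * apply: HB; try lia.
      by rewrite /fac -(_ : x - 1 + size u = x + size u - 1) -?hz //; lia.
Qed.

Lemma lconj_mono (Sigma : finType) (N : Type) (X Y : N -> seq Sigma -> Prop) a z :
  (forall B u, X B u -> Y B u) -> lconj_sem X a z -> lconj_sem Y a z.
Proof. move=> h; case: a => [u|u B v] //= [w1 [e hx]]; exists w1; split => //; exact: h. Qed.

Lemma lstep_mono (Sigma : finType) (N : Type) (P : seq (lrule Sigma N))
  (X Y : N -> seq Sigma -> Prop) A z :
  (forall B u, X B u -> Y B u) -> lstep P X A z -> lstep P Y A z.
Proof.
move=> h [al [hin hall]]; exists al; split => // a ha.
exact: (lconj_mono h (hall a ha)).
Qed.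

Lemma lgen_closed (Sigma : finType) (N : Type) (P : seq (lrule Sigma N)) A z :
  lstep P (lgen P) A z -> lgen P A z.
Proof.
move=> h X HX; apply: (HX); apply: (lstep_mono _ h) => B u hu; exact: hu X HX.
Qed.

Definition epsb (Sigma : finType) (N : Type) (P : seq (lrule Sigma N)) (B : N) : bool :=
  if ClassicalEpsilon.excluded_middle_informative (lgen P B [::]) then true else false.

Lemma epsbP (Sigma : finType) (N : Type) (P : seq (lrule Sigma N)) B :
  epsb P B <-> lgen P B [::].
Proof.
rewrite /epsb; case: ClassicalEpsilon.excluded_middle_informative => h; split => //.
Qed.

Definition mkcls (Sigma : finType) (N : Type) (eb : N -> bool) (P : seq (lrule Sigma N)) (St : N)
  : seq (hclause Sigma (option N)) :=
  HClause [:: LEq Sigma (option N)] (Some None) ::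
  HClause [:: LUnary (option N) true (UMin Sigma) VX (Posz 0);
              LUnary (option N) true (UMax Sigma) VY (Posz 0);
              @LRel Sigma (option N) (Some St) 0 0] None ::
  List.flat_map (fun r => List.map (fun c => HClause c (Some (Some r.1))) (combos eb r.2)) P.

Lemma fac_full (Sigma : finType) (w : seq Sigma) : fac w 1 (size w) = w.
Proof. by rewrite /fac /sub take_size drop0. Qed.

Lemma key (Sigma : finType) (N : Type) (P : seq (lrule Sigma N)) (St : N) (w : seq Sigma) :
  w <> [::] -> (horn_sat (mkcls (epsb P) P St) w <-> ~ lgen P St w).
Proof.
case: w => [//|s0 w0] _; set w := s0 :: w0.
have hn : 0 < size w by [].
split.
- move=> [I HI] hl.
  have HEQ : forall p, 0 < p <= size w -> I None p p.
    move=> p hp; apply: (HI p p hp hp _ (or_introl erefl) (leqnn p)).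
    by move=> d [<-|[]].
  pose X := fun A z => lgen P A z /\
    forall x y, 0 < x -> x <= y -> y <= size w -> fac w x y = z -> I (Some A) x y.
  have HX : forall B u, lstep P X B u -> X B u.
    move=> A z hst; split.
      by apply: lgen_closed; apply: lstep_mono hst => B u [].
    move=> x y hx hxy hy e.
    case: hst => [al [hin hall]].
    have [c [hc lc]] : exists c, List.In c (combos (epsb P) al) /\ lits w I x y c.
      apply: combos_complete => a ha.
      apply: (alt_complete s0 (X := X) hx hxy hy HEQ).
      + by move=> B p q hp hpq hq [_ hq2]; apply: hq2.
      + by move=> B [hq _]; apply/epsbP.
      + by rewrite e; apply: hall.
    have hxr : 0 < x <= size w by apply/andP; split; lia.
    have hyr : 0 < y <= size w by apply/andP; split; lia.
    have := HI x y hxr hyr (HClause c (Some (Some A))) _ hxy lc; apply.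
    right; right; apply/List.in_flat_map; exists (A, al); split => //.
    by apply/List.in_map_iff; exists c.
  have [_ h2] := hl X HX.
  have hI := h2 1 (size w) isT hn (leqnn _) (fac_full w).
  have h1r : 0 < 1 <= size w by apply/andP; split; lia.
  have hnr : 0 < size w <= size w by apply/andP; split; lia.
  have := HI 1 (size w) h1r hnr _ (or_intror (or_introl erefl)) hn.
  apply => d [<-|[<-|[<-|[]]]] /=.
  + by [].
  + by rewrite /wmax eqxx.
  + by rewrite /shiftdown /=; split.
- move=> hl.
  exists (fun r p q => match r with None => p = q | Some A => lgen P A (fac w p q) end).
  move=> x y /andP [hx hxn] /andP [hy hyn] c [<-|[<-|hc]] hxy hb.
  + by apply: (hb (LEq Sigma (option N))); left.
  + have h1 := hb _ (or_introl erefl).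
    have h2 := hb _ (or_intror (or_introl erefl)).
    have [h3 _] := hb _ (or_intror (or_intror (or_introl erefl))).
    move: h1 h2 h3 => /= /eqP -> /eqP ->; rewrite /shiftdown /= fac_full; exact: hl.
  + move: hc hb => /List.in_flat_map [[A al] [hin /List.in_map_iff [c0 [<- hc0]]]] /= hb.
    apply: lgen_closed; exists al; split => // a ha.
    have [b [hb1 lb]] := combos_sound hc0 hb ha.
    apply: (alt_sound s0 hx hxy hyn _ _ _ hb1 lb) => //.
    by move=> B /epsbP.
Qed.

Theorem lemma8 (Sigma : finType) (L : seq Sigma -> Prop) :
  (forall w, L w -> w <> [::]) ->
  LinConj (fun w => w <> [::] /\ ~ L w) ->
  incl_ESO_HORN L.
Proof.
move=> hne [N [P [St [_ hG]]]].
exists (option N : finType), (mkcls (epsb P) P St) => w; split.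
- move=> hL; have wne := hne w hL; split => //.
  apply/(key _ _ wne) => hl; have [_ nL] := proj2 (hG w) hl; exact: nL hL.
- move=> [wne hh]; have nl := proj1 (key _ _ wne) hh.
  case: (Classical_Prop.classic (L w)) => // nL.
  exfalso; exact: nl (proj1 (hG w) (conj wne nL)).
Qed.
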